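(* Let $X_1,\dots,X_d$ be smooth vector fields defined on an open subset of $\mathbb{R}^n$. Consider the following iterative procedure: Step 1: Find the reduced row echelon form of the coefficient matrix of $X_1,\dots,X_d$ (row operations with smooth functions as coefficients, on an open set where the required pivots do not vanish), and let $Y_1,\dots,Y_r$ be the vector fields corresponding to its nonzero rows. If $[Y_i,Y_j]=0$ for all $i,j$, stop. Otherwise go to Step 2. Step 2: If some $[Y_i,Y_j]\neq 0$, set $Y_{r+1}:=[Y_i,Y_j]$, and return to Step 1 with the family $Y_1,\dots,Y_r,Y_{r+1}$ in place of $X_1,\dots,X_d$. Then this process terminates in at most $n$ iterations, and if $V_1,\dots,V_m$ are the (pairwise commuting) vector fields obtained at the end of the process, the (local) joint invariants of $X_1,\dots,X_d$ coincide with the (local) joint invariants of $V_1,\dots,V_m$.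
   Context: A vector field $\sum_{k=1}^n c_k\,\partial/\partial x_k$ is identified with its row of coefficient functions $(c_1,\dots,c_n)$, and a finite family of vector fields with the matrix whose rows are these coefficient rows (its coefficient matrix). A (local) joint invariant of a family of vector fields $Z_1,\dots,Z_m$ is a smooth function $f$ on some open subset with $Z_i(f)=0$ for all $i$. $[\cdot,\cdot]$ denotes the Lie bracket of vector fields. *)

(* Defs.v *)
From HB Require Import structures.
From mathcomp Require Import all_boot all_order all_algebra.
From mathcomp Require Import all_classical all_reals all_analysis.
Set Implicit Arguments. Unset Strict Implicit. Unset Printing Implicit Defensive.
Import Order.TTheory GRing.Theory Num.Theory.
Import numFieldNormedType.Exports.
Local Open Scope classical_set_scope.
Local Open Scope ring_scope.

Section VF.
Variables (R : realType) (n : nat).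

Definition pt := 'rV[R]_n.

Definition vfield := pt -> pt.
Definition vf0 : vfield := fun _ => 0.

Definition evec (i : 'I_n) : pt := delta_mx 0 i.

Definition pd (i : 'I_n) (f : pt -> R) (x : pt) : R := 'D_(evec i) f x.

Fixpoint Ck (k : nat) (U : set pt) (f : pt -> R) : Prop :=
  match k with
  | 0 => forall x, U x -> {for x, continuous f}
  | k'.+1 => (forall x, U x -> differentiable f x) /\
             (forall i : 'I_n, Ck k' U (pd i f))
  end.
Definition smooth_on (U : set pt) (f : pt -> R) : Prop := forall k, Ck k U f.

Definition vf_smooth_on (U : set pt) (X : vfield) : Prop :=
  forall k : 'I_n, smooth_on U (fun x => X x 0 k).

Definition vf_apply (X : vfield) (f : pt -> R) : pt -> R :=
  fun x => \sum_(k < n) X x 0 k * pd k f x.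

Definition lie (X Y : vfield) : vfield :=
  fun x => \row_(k < n) (vf_apply X (fun y => Y y 0 k) x
                          - vf_apply Y (fun y => X y 0 k) x).

Definition row_swap (s : seq vfield) (i j : nat) : seq vfield :=
  mkseq (fun k => nth vf0 s (if k == i then j else if k == j then i else k))
        (size s).
Definition row_scale (s : seq vfield) (i : nat) (c : pt -> R) : seq vfield :=
  mkseq (fun k => if k == i then (fun x => c x *: nth vf0 s i x) else nth vf0 s k)
        (size s).
Definition row_addmul (s : seq vfield) (i j : nat) (c : pt -> R) : seq vfield :=
  mkseq (fun k => if k == i then (fun x => nth vf0 s i x + c x *: nth vf0 s j x)
                  else nth vf0 s k) (size s).

Inductive elem_rowop (U : set pt) : seq vfield -> seq vfield -> Prop :=
  | Eswap s i j : (i < size s)%N -> (j < size s)%N ->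
      elem_rowop U s (row_swap s i j)
  | Escale s i c : (i < size s)%N -> smooth_on U c ->
      (forall x, U x -> c x != 0) -> elem_rowop U s (row_scale s i c)
  | Eaddmul s i j c : (i < size s)%N -> (j < size s)%N -> i != j ->
      smooth_on U c -> elem_rowop U s (row_addmul s i j c).

Inductive rowops (U : set pt) : seq vfield -> seq vfield -> Prop :=
  | Rrefl s : rowops U s s
  | Rstep s t u : elem_rowop U s t -> rowops U t u -> rowops U s u.

(* the family Y (rows of the matrix) is in reduced row echelon form on U,
   with (necessarily constant) pivot columns p 0 < p 1 < ... *)
Definition rref_on (U : set pt) (Y : seq vfield) : Prop :=
  exists p : nat -> 'I_n,
    (forall i j, (i < j)%N -> (j < size Y)%N -> (p i < p j)%N) /\
    forall i, (i < size Y)%N -> forall x, U x ->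
      [/\ nth vf0 Y i x 0 (p i) = 1,
          (forall j, (j < size Y)%N -> j != i -> nth vf0 Y j x 0 (p i) = 0)
        & (forall k : 'I_n, (k < p i)%N -> nth vf0 Y i x 0 k = 0)].

(* Y = the nonzero rows of the reduced row echelon form of X, computed on U
   by row operations with smooth coefficients *)
Definition rref_of (U : set pt) (X Y : seq vfield) : Prop :=
  exists Z, [/\ rowops U X Z,
    Y = take (size Y) Z,
    (forall k, (size Y <= k)%N -> (k < size Z)%N -> forall x, U x -> nth vf0 Z k x = 0)
    & rref_on U Y].

Definition coefmx (Z : seq vfield) (x : pt) : 'M[R]_(size Z, n) :=
  \matrix_(i < size Z, j < n) nth vf0 Z i x 0 j.

(* Step 1: on a nonempty open W' inside W, Y is the rref of the family Z;
   W' is chosen where the required pivots do not vanish, i.e. the rref has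
   as many nonzero rows as the (generic = maximal) rank of Z on W *)
Definition step1 (W : set pt) (Z : seq vfield) (W' : set pt) (Y : seq vfield) : Prop :=
  [/\ open W', W' !=set0, W' `<=` W, rref_of W' Z Y &
      forall x, W x -> (\rank (coefmx Z x) <= size Y)%N].

Definition round_continue (W : set pt) (Z : seq vfield) (W' : set pt) (Z' : seq vfield) :=
  exists Y i j, [/\ step1 W Z W' Y, (i < size Y)%N, (j < size Y)%N,
    (exists x, W' x /\ lie (nth vf0 Y i) (nth vf0 Y j) x != 0)
    & Z' = rcons Y (lie (nth vf0 Y i) (nth vf0 Y j))].

(* cont U X k W Z : starting from X on U, after k iterations that each went
   on to Step 2, the process is at Step 1 with family Z on W *)
Inductive cont (U : set pt) (X : seq vfield) : nat -> set pt -> seq vfield -> Prop :=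
  | cont0 : cont U X 0 U X
  | contS k W Z W' Z' : cont U X k W Z -> round_continue W Z W' Z' ->
      cont U X k.+1 W' Z'.

Definition final (U : set pt) (X : seq vfield) (W : set pt) (V : seq vfield) : Prop :=
  exists k W0 Z, [/\ cont U X k W0 Z, step1 W0 Z W V &
    forall i j, (i < size V)%N -> (j < size V)%N -> forall x, W x ->
      lie (nth vf0 V i) (nth vf0 V j) x = 0].

Definition joint_invariant (F : seq vfield) (O : set pt) (f : pt -> R) : Prop :=
  [/\ open O, smooth_on O f &
      forall Z, Z \in F -> forall x, O x -> vf_apply Z f x = 0].

End VF.

(* Main.v *)
Require Import Defs.
From HB Require Import structures.
From mathcomp Require Import all_boot all_order all_algebra.
From mathcomp Require Import all_classical all_reals all_analysis.
From mathcomp Require Import zify ring lra.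
Import Order.TTheory GRing.Theory Num.Theory.
Import numFieldNormedType.Exports.
Local Open Scope classical_set_scope.
Local Open Scope ring_scope.
Set Implicit Arguments. Unset Strict Implicit. Unset Printing Implicit Defensive.
Section Alg.
Context (R : realType) (n : nat).
Local Notation vf := (vfield R n).
Local Notation pt := (pt R n).
Local Notation vf0 := (@vf0 R n).

Definition ann (s : seq vf) (f : pt -> R) (x : pt) :=
  forall i, (i < size s)%N -> vf_apply (nth vf0 s i) f x = 0.

Lemma vf_apply0 f x : vf_apply vf0 f x = 0.
Proof. by rewrite /vf_apply big1 // => k _; rewrite /Defs.vf0 mxE mul0r. Qed.

Lemma vf_apply_zero (Y : vf) f x : Y x = 0 -> vf_apply Y f x = 0.
Proof. by move=> H; rewrite /vf_apply big1 // => k _; rewrite H mxE mul0r. Qed.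

Lemma vf_applyZ (c : pt -> R) (Y : vf) f x :
  vf_apply (fun y => c y *: Y y) f x = c x * vf_apply Y f x.
Proof.
rewrite /vf_apply mulr_sumr; apply: eq_bigr => k _.
by rewrite mxE mulrA.
Qed.

Lemma vf_applyDZ (c : pt -> R) (Y Z : vf) f x :
  vf_apply (fun y => Y y + c y *: Z y) f x = vf_apply Y f x + c x * vf_apply Z f x.
Proof.
rewrite /vf_apply mulr_sumr -big_split; apply: eq_bigr => k _.
by rewrite !mxE mulrDl mulrA.
Qed.

Lemma elem_rowop_size (U : set pt) s t : elem_rowop U s t -> size t = size s.
Proof. by case=> *; rewrite /row_swap /row_scale /row_addmul size_mkseq. Qed.

Lemma elem_rowop_fwd (U : set pt) s t f x : elem_rowop U s t -> ann s f x -> ann t f x.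
Proof.
case=> {s t} [s i j Hi Hj|s i c Hi _ _|s i j c Hi Hj Hij _];
  rewrite /row_swap /row_scale /row_addmul => H m; rewrite size_mkseq => Hm;
  rewrite nth_mkseq //.
- apply: H; case: ifP => _ //; case: ifP => _ //.
- case: ifP => _; last exact: H.
  by rewrite vf_applyZ H // mulr0.
- case: ifP => _; last exact: H.
  by rewrite vf_applyDZ !H // mulr0 addr0.
Qed.

Lemma elem_rowop_bwd (U : set pt) s t f x : U x -> elem_rowop U s t -> ann t f x -> ann s f x.
Proof.
move=> Ux; case=> {s t} [s i j Hi Hj|s i c Hi _ cn0|s i j c Hi Hj Hij _];
  rewrite /row_swap /row_scale /row_addmul => H m Hm.
- pose k := if m == i then j else if m == j then i else m.
  have Hk : (k < size s)%N by rewrite /k; case: ifP => _ //; case: ifP.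
  have := H k; rewrite size_mkseq nth_mkseq // => /(_ Hk).
  suff -> : (if k == i then j else if k == j then i else k) = m by [].
  by rewrite /k; repeat case: eqP => //=; lia.
- have := H m; rewrite size_mkseq nth_mkseq // => /(_ Hm).
  case: ifP => [/eqP ->|_] //.
  by rewrite vf_applyZ => /eqP; rewrite mulf_eq0 (negPf (cn0 _ Ux)) => /eqP.
- have := H m; rewrite size_mkseq nth_mkseq // => /(_ Hm).
  case: ifP => [/eqP ->|_] //.
  have := H j; rewrite size_mkseq nth_mkseq // => /(_ Hj).
  rewrite eq_sym (negPf Hij) => Hj0.
  by rewrite vf_applyDZ Hj0 mulr0 addr0.
Qed.

Lemma rowops_fwd (U : set pt) s t f x : rowops U s t -> ann s f x -> ann t f x.
Proof. by elim=> // {s t} s t u H _ IH /(elem_rowop_fwd H). Qed.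

Lemma rowops_bwd (U : set pt) s t f x : U x -> rowops U s t -> ann t f x -> ann s f x.
Proof. by move=> Ux; elim=> // {s t} s t u H _ IH /IH /(elem_rowop_bwd Ux H). Qed.

Lemma rref_fwd (U : set pt) Z Y f x : rref_of U Z Y -> ann Z f x -> ann Y f x.
Proof.
case=> Zr [HZ HY _ _] /(rowops_fwd HZ) H i Hi.
have Hi' : (i < size Zr)%N.
  have := congr1 size HY; rewrite size_take; case: ltnP => h e; lia.
have e : nth vf0 Y i = nth vf0 Zr i by rewrite {1}HY nth_take.
by rewrite e H.
Qed.

Lemma rref_bwd (U : set pt) Z Y f x : U x -> rref_of U Z Y -> ann Y f x -> ann Z f x.
Proof.
move=> Ux [Zr [HZ HY H0 _]] H; apply: (rowops_bwd Ux HZ) => i Hi.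
case: (ltnP i (size Y)) => iY.
  have e : nth vf0 Y i = nth vf0 Zr i by rewrite {1}HY nth_take.
  by rewrite -e H.
by rewrite vf_apply_zero // H0.
Qed.

Lemma ann_rcons Y b f x : ann (rcons Y b) f x -> ann Y f x.
Proof.
move=> H i Hi; have := H i; rewrite size_rcons nth_rcons Hi; apply.
exact: ltnW.
Qed.

Lemma cont_sub (U : set pt) X k W Z : cont U X k W Z -> W `<=` U.
Proof.
elim=> // {k W Z} k W Z W' Z' _ IH [Y [i [j [[_ _ sub _ _] _ _ _ _]]]].
by move=> y /sub /IH.
Qed.

Lemma cont_bwd (U : set pt) X k W Z f x : cont U X k W Z -> W x -> ann Z f x -> ann X f x.
Proof.
elim=> // {k W Z} k W Z W' Z' _ IH [Y [i [j [[_ _ sub rr _] _ _ _ ->]]]] Wx H.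
apply: IH; first exact: sub.
apply: rref_bwd rr _ => //; exact: ann_rcons H.
Qed.

End Alg.
Section Term.
Context (R : realType) (n : nat).
Local Notation vf := (vfield R n).
Local Notation pt := (pt R n).
Local Notation vf0 := (@vf0 R n).

Lemma rowfree_crit m (M : 'M[R]_(m, n)) (r : nat) (p : nat -> 'I_n) (q : 'I_n)
  (a0 : 'I_m) : (m <= r.+1)%N -> (a0 : nat) = r ->
  (forall (a : 'I_m) b, (b < r)%N -> M a (p b) = ((a : nat) == b)%:R) ->
  M a0 q != 0 -> row_free M.
Proof.
move=> hm ha0 Hp Hq; rewrite -kermx_eq0; apply/eqP/row_matrixP => i.
rewrite row0; set u := row i _.
have Hu : u *m M = 0 by rewrite /u -row_mul mulmx_ker row0.
clearbody u.
have Hlt : forall b : 'I_m, (b < r)%N -> u 0 b = 0.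
  move=> b hb; have := congr1 (fun v : 'rV[R]_n => v 0 (p b)) Hu; rewrite !mxE.
  rewrite (bigD1 b) //= big1 ?addr0.
    by rewrite Hp // eqxx mulr1.
  by move=> c cb; rewrite Hp // (_ : (c : nat) == b = false) ?mulr0 //; apply/negbTE.
apply/rowP => b; rewrite mxE.
case: (ltnP b r) => hb; first exact: Hlt.
have ba0 : b = a0 by apply/val_inj; have := ltn_ord b; rewrite /= ha0; lia.
subst b; have := congr1 (fun v : 'rV[R]_n => v 0 q) Hu; rewrite !mxE.
rewrite (bigD1 a0) //= big1 ?addr0.
  by move/eqP; rewrite mulf_eq0 (negPf Hq) orbF => /eqP.
move=> c ca0; rewrite Hlt ?mul0r //.
have : (c : nat) != a0 by [].
have := ltn_ord c; rewrite ha0; lia.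
Qed.

Lemma rref_size (U : set pt) Y : rref_on U Y -> (size Y <= n)%N.
Proof.
case=> p [Hinc _].
have H : forall i, (i < size Y)%N -> (i <= p i)%N.
  elim=> // i IH hi; have := Hinc i i.+1 (ltnSn i) hi.
  have := IH (ltnW hi); lia.
case e: (size Y) => [//|s]; have := H s; rewrite e => /(_ (ltnSn s)).
have := ltn_ord (p s); lia.
Qed.

Lemma lie_self (A : vf) x : lie A A x = 0.
Proof. by apply/rowP => k; rewrite !mxE subrr. Qed.

Lemma pd_loc_cst (W : set pt) (g : pt -> R) c k x : open W -> W x ->
  (forall y, W y -> g y = c) -> pd k g x = 0.
Proof.
move=> oW Wx Hg; rewrite /pd (@near_eq_derive _ _ _ g (cst c)) ?derive_cst //.
have : nbhs x W by apply: open_nbhs_nbhs.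
by apply: filterS => y /Hg.
Qed.

Lemma lie_pivot (W : set pt) Y (p : nat -> 'I_n) a b c x :
  open W -> W x ->
  (forall i, (i < size Y)%N -> forall x, W x ->
      [/\ nth vf0 Y i x 0 (p i) = 1,
          (forall j, (j < size Y)%N -> j != i -> nth vf0 Y j x 0 (p i) = 0)
        & (forall k : 'I_n, (k < p i)%N -> nth vf0 Y i x 0 k = 0)]) ->
  (a < size Y)%N -> (b < size Y)%N -> (c < size Y)%N ->
  lie (nth vf0 Y a) (nth vf0 Y b) x 0 (p c) = 0.
Proof.
move=> oW Wx H ha hb hc; rewrite mxE /vf_apply.
have cst_of : forall d, (d < size Y)%N -> forall y, W y ->
    nth vf0 Y d y 0 (p c) = ((d == c)%N)%:R.
  move=> d hd y Wy; have [h1 h2 _] := H c hc y Wy.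
  case: (eqVneq d c) => [->|dc]; first by rewrite h1.
  by rewrite h2.
rewrite !big1 ?subrr // => k _.
  by rewrite (pd_loc_cst _ oW Wx (cst_of _ ha)) mulr0.
by rewrite (pd_loc_cst _ oW Wx (cst_of _ hb)) mulr0.
Qed.

Lemma round_facts (W : set pt) (Z : seq vf) W' Z' : round_continue W Z W' Z' ->
  exists Y : seq vf, [/\ size Z' = (size Y).+1, (2 <= size Y)%N, (size Y <= n)%N,
    (forall x, W x -> \rank (coefmx Z x) <= size Y)%N &
    exists x, W' x /\ \rank (coefmx Z' x) = size Z'].
Proof.
case=> Y [i [j [[oW' _ _ rr Hrk] hi hj [x [W'x Hx]] HZ']]].
have [Zr [_ _ _ rro]] := rr.
have hs := rref_size rro.
have [p [_ Hp]] := rro.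
exists Y; split => //.
- by rewrite HZ' size_rcons.
- have ij : i != j by apply: contraNneq Hx => ->; rewrite lie_self.
  lia.
exists x; split => //.
have [q Hq] : exists q : 'I_n, lie (nth vf0 Y i) (nth vf0 Y j) x 0 q != 0.
  apply/existsP; apply: contraNT Hx => /existsPn H; apply/eqP/rowP => q.
  by have := H q; rewrite negbK => /eqP ->; rewrite mxE.
subst Z'.
have hsz : (size Y < size (rcons Y (lie (nth vf0 Y i) (nth vf0 Y j))))%N by rewrite size_rcons.
apply/eqP; rewrite -/(row_free _).
apply: (@rowfree_crit _ _ (size Y) p q (Ordinal hsz)) => //.
- by rewrite size_rcons.
- move=> a b hb; rewrite mxE nth_rcons.
  case: ltnP => ha.
    have [h1 h2 _] := Hp b hb x W'x.
    case: (eqVneq (a : nat) b) => [->|ab]; first by rewrite h1.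
    by rewrite h2.
  have ha' : (a < (size Y).+1)%N by rewrite -(size_rcons Y (lie (nth vf0 Y i) (nth vf0 Y j))); exact: ltn_ord.
  have -> : (a : nat) == size Y by lia.
  rewrite (_ : (a : nat) == b = false); last by lia.
  exact: (lie_pivot oW' W'x Hp).
- by rewrite mxE /= nth_rcons ltnn eqxx.
Qed.

Lemma cont_inv (U : set pt) X k W Z : cont U X k W Z ->
  k = 0%N \/ [/\ (k.+2 <= size Z)%N, (size Z <= n.+1)%N &
     exists x, W x /\ \rank (coefmx Z x) = size Z].
Proof.
elim=> [|{k W Z} k W Z W' Z' _ IH rc]; first by left.
right; have [Y [e h2 hn hrk [x [W'x hx]]]] := round_facts rc.
split; [|lia|by exists x].
case: IH => [->|[h1 _ [y [Wy hy]]]]; first lia.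
have := hrk y Wy; rewrite hy; lia.
Qed.

Lemma cont_lt (U : set pt) X k W Z : (0 < n)%N -> cont U X k W Z -> (k < n)%N.
Proof. by move=> n0 /cont_inv [->//|[h1 h2 _]]; lia. Qed.

End Term.
Section Smooth.
Context (R : realType) (n : nat).
Local Notation pt := 'rV[R]_n.

Lemma near0_differentiable (h : pt -> R) (x : pt) :
  (\forall y \near x, h y = 0) -> differentiable h x.
Proof.
move=> H.
have hx : h x = 0 := nbhs_singleton H.
have H0 : \forall e \near (0 : pt), h (x + e) = 0 by apply/(nbhs0P (fun y => h y = 0)).
have hd : h \o shift x = cst (h x) + \0 +o_ (0 : pt) id.
  apply/eqaddoP => eps eps0; move: H0; apply: filterS => e he.
  by rewrite !fctE /= (addrC e x) he hx addr0 subrr normr0 mulr_ge0 // ltW.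
have dd : 'd h x = \0 :> (pt -> R).
  apply/diff_unique; last exact: hd.
  by move=> y; exact: cst_continuous.
by apply/diff_locallyP; rewrite dd; split => //; exact: cst_continuous.
Qed.

Lemma near_differentiable (f g : pt -> R) (x : pt) :
  (\forall y \near x, f y = g y) -> differentiable f x -> differentiable g x.
Proof.
move=> H df; have -> : g = f + (g - f) by apply/funext => y; rewrite /= addrC subrK.
apply: differentiableD => //; apply: near0_differentiable.
by move: H; apply: filterS => y e; rewrite !fctE e subrr.
Qed.

Lemma near_continuous (f g : pt -> R) (x : pt) :
  (\forall y \near x, f y = g y) -> {for x, continuous f} -> {for x, continuous g}.
Proof.
move=> H cf.
have e : f x = g x := nbhs_singleton H.
rewrite /prop_for /continuous_at -e; apply: cvg_trans cf.
exact: (near_eq_cvg H).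
Qed.

Lemma open_near (U : set pt) x : open U -> U x -> \forall y \near x, U y.
Proof. by move=> oU Ux; apply: open_nbhs_nbhs. Qed.

Lemma Ck_loc k (U : set pt) (f g : pt -> R) : open U ->
  (forall x, U x -> f x = g x) -> Ck k U f -> Ck k U g.
Proof.
move=> oU; elim: k f g => [|k IH] f g e /=.
  move=> H x Ux; apply: near_continuous (H x Ux).
  by move: (open_near oU Ux); apply: filterS => y /e.
move=> [Hd Hp]; split.
  move=> x Ux; apply: near_differentiable (Hd x Ux).
  by move: (open_near oU Ux); apply: filterS => y /e.
move=> i; apply: IH (Hp i) => x Ux; rewrite /pd; apply: near_eq_derive.
by move: (open_near oU Ux); apply: filterS => y /e.
Qed.

Lemma Ck_mono k (U : set pt) f : Ck k.+1 U f -> Ck k U f.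
Proof.
elim: k f => [|k IH] f /=.
  by move=> [Hd _] x Ux; apply: differentiable_continuous; exact: Hd.
by move=> [Hd Hp]; split => // i; apply: IH; exact: Hp.
Qed.

Lemma Ck_sub k (U V : set pt) f : V `<=` U -> Ck k U f -> Ck k V f.
Proof.
move=> VU; elim: k f => [|k IH] f /=.
  by move=> H x /VU; apply: H.
by move=> [Hd Hp]; split => [x /VU|i]; [apply: Hd|apply: IH; exact: Hp].
Qed.

Lemma Ck_cst k (U : set pt) (c : R) : Ck k U (fun _ => c).
Proof.
elim: k c => [|k IH] c /=; first by move=> x _; exact: cst_continuous.
split => [x _|i]; first exact: differentiable_cst.
have -> : pd i (fun _ : pt => c) = fun _ => 0.
  by apply/funext => y; rewrite /pd (derive_cst c).
exact: IH.
Qed.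

Lemma pdD (f g : pt -> R) i x : differentiable f x -> differentiable g x ->
  pd i (fun y => f y + g y) x = pd i f x + pd i g x.
Proof.
move=> df dg; rewrite /pd; have -> : (fun y => f y + g y) = f + g by [].
by rewrite deriveD //; exact: diff_derivable.
Qed.

Lemma pdM (f g : pt -> R) i x : differentiable f x -> differentiable g x ->
  pd i (fun y => f y * g y) x = f x * pd i g x + g x * pd i f x.
Proof.
move=> df dg; rewrite /pd; have -> : (fun y => f y * g y) = f * g by [].
by rewrite deriveM //; exact: diff_derivable.
Qed.

Lemma Ck_add k (U : set pt) f g : open U -> Ck k U f -> Ck k U g ->
  Ck k U (fun y => f y + g y).
Proof.
move=> oU; elim: k f g => [|k IH] f g /=.
  by move=> cf cg x Ux; apply: continuousD; [exact: cf|exact: cg].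
move=> [df pf] [dg pg]; split.
  by move=> x Ux; apply: differentiableD; [exact: df|exact: dg].
move=> i; apply: (@Ck_loc _ _ (fun y => pd i f y + pd i g y)) => //.
  by move=> x Ux; rewrite pdD //; [exact: df|exact: dg].
exact: IH.
Qed.

Lemma Ck_mul k (U : set pt) f g : open U -> Ck k U f -> Ck k U g ->
  Ck k U (fun y => f y * g y).
Proof.
move=> oU; elim: k f g => [|k IH] f g /=.
  by move=> cf cg x Ux; apply: continuousM; [exact: cf|exact: cg].
move=> Cf Cg; have [df pf] := Cf; have [dg pg] := Cg.
split.
  by move=> x Ux; apply: differentiableM; [exact: df|exact: dg].
move=> i; apply: (@Ck_loc _ _ (fun y => f y * pd i g y + g y * pd i f y)) => //.
  by move=> x Ux; rewrite pdM //; [exact: df|exact: dg].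
apply: Ck_add => //; apply: IH => //; exact: Ck_mono.
Qed.

Lemma Ck_opp k (U : set pt) f : open U -> Ck k U f -> Ck k U (fun y => - f y).
Proof.
move=> oU Cf; have -> : (fun y => - f y) = fun y => (-1) * f y.
  by apply/funext => y; rewrite mulN1r.
by apply: Ck_mul => //; exact: Ck_cst.
Qed.

Lemma Ck_sum k (U : set pt) (F : 'I_n -> pt -> R) : open U ->
  (forall l, Ck k U (F l)) -> Ck k U (fun y => \sum_(l < n) F l y).
Proof.
move=> oU HF.
suff : forall r, Ck k U (fun y => \sum_(l <- r) F l y) by apply.
elim=> [|a r IH].
  have -> : (fun y : pt => \sum_(l <- [::]) F l y) = fun _ => 0.
    by apply/funext => y; rewrite big_nil.
  exact: Ck_cst.
have -> : (fun y => \sum_(l <- a :: r) F l y) = fun y => F a y + \sum_(l <- r) F l y.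
  by apply/funext => y; rewrite big_cons.
exact: Ck_add.
Qed.

End Smooth.
Section Clairaut.
Context (R : realType) (n : nat).
Local Notation pt := 'rV[R]_n.

Lemma line_is_derive (F : pt -> R) (u y : pt) (s0 : R) :
  derivable F (s0 *: u + y) u ->
  is_derive s0 1 (fun s : R => F (s *: u + y)) ('D_u F (s0 *: u + y)).
Proof.
move=> dF.
have E : (fun h : R => h^-1 *: (((fun s : R => F (s *: u + y)) \o shift s0) (h *: 1)
             - F (s0 *: u + y))) =
         (fun h : R => h^-1 *: ((F \o shift (s0 *: u + y)) (h *: u) - F (s0 *: u + y))).
  apply/funext => h /=; congr (_ *: (F _ - _)).
  by rewrite -[h *: 1]/(h * 1) mulr1 scalerDl addrA.
apply: DeriveDef; first by rewrite /derivable E.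
by rewrite /derive E.
Qed.

Lemma in_cc (a b t : R) : (t \in `[a, b]%R) = (a <= t <= b).
Proof. by rewrite in_itv. Qed.
Lemma in_oo (a b t : R) : (t \in `]a, b[%R) = (a < t < b).
Proof. by rewrite in_itv. Qed.

Lemma mvt_gen (g dg : R -> R) (h : R) : 0 < h ->
  (forall t, 0 <= t <= h -> is_derive t 1 g (dg t)) ->
  exists2 c, 0 < c < h & g h - g 0 = dg c * h.
Proof.
move=> h0 der.
have cont : {within `[0, h], continuous g}.
  apply: continuous_in_subspaceT => t; rewrite inE /= in_cc => /der [dv _].
  exact/differentiable_continuous/derivable1_diffP.
have der' : forall t, t \in `]0, h[%R -> is_derive t 1 g (dg t).
  by move=> t; rewrite in_oo => /andP [a b]; apply: der; rewrite !ltW.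
have [c hc E] := MVT h0 der' cont.
by exists c; [rewrite -in_oo | rewrite E subr0].
Qed.

Lemma mvt_line (F : pt -> R) (w y : pt) (h : R) : 0 < h ->
  (forall t, 0 <= t <= h -> differentiable F (t *: w + y)) ->
  exists2 c, 0 < c < h & F (h *: w + y) - F (0 *: w + y) = 'D_w F (c *: w + y) * h.
Proof.
move=> h0 Hd; apply: (mvt_gen (g := fun t => F (t *: w + y))) => // t /Hd dt.
by apply: line_is_derive; exact: diff_derivable.
Qed.

Lemma mvt_line2 (F : pt -> R) (w y1 y2 : pt) (h : R) : 0 < h ->
  (forall t, 0 <= t <= h -> differentiable F (t *: w + y1) /\ differentiable F (t *: w + y2)) ->
  exists2 c, 0 < c < h &
    (F (h *: w + y1) - F (h *: w + y2)) - (F (0 *: w + y1) - F (0 *: w + y2)) =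
    ('D_w F (c *: w + y1) - 'D_w F (c *: w + y2)) * h.
Proof.
move=> h0 Hd.
apply: (mvt_gen (g := fun t => F (t *: w + y1) - F (t *: w + y2))) => // t /Hd [d1 d2].
have := is_deriveB (line_is_derive (diff_derivable (v:=w) d1)) (line_is_derive (diff_derivable (v:=w) d2)).
by [].
Qed.


Lemma eq_from_small (a b : R) : (forall e, 0 < e -> `|a - b| < e) -> a = b.
Proof.
move=> H; case: (ltrP 0 `|a - b|) => [/H|]; first by rewrite ltxx.
by rewrite normr_le0 subr_eq0 => /eqP.
Qed.

Lemma fin_small (a b pv qv e : R) : pv = qv -> `|a - pv| < e / 2 -> `|b - qv| < e / 2 ->
  `|a - b| < e.
Proof.
move=> -> h1 h2.
have -> : a - b = (a - qv) - (b - qv) by ring.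
apply: (le_lt_trans (ler_normB _ _)).
by rewrite [ltRHS](splitr e) ltrD.
Qed.

Lemma open_near' (U : set pt) x : open U -> U x -> \forall y \near x, U y.
Proof. by move=> oU Ux; apply: open_nbhs_nbhs. Qed.

Lemma clairaut_gen (O : set pt) (f : pt -> R) (u v : pt) x : open O -> O x ->
  (forall y, O y -> differentiable f y) ->
  (forall y, O y -> differentiable ('D_u f) y) ->
  (forall y, O y -> differentiable ('D_v f) y) ->
  (forall y, O y -> {for y, continuous ('D_v ('D_u f))}) ->
  (forall y, O y -> {for y, continuous ('D_u ('D_v f))}) ->
  'D_v ('D_u f) x = 'D_u ('D_v f) x.
Proof.
move=> oO Ox Hd Hdu Hdv Hcvu Hcuv.
pose A := 'D_v ('D_u f) x; pose B := 'D_u ('D_v f) x.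
apply: (@eq_from_small A B) => e e0.
have e2 : 0 < e / 2 by rewrite divr_gt0.
have cA := @cvgr_dist_lt _ _ _ _ (nbhs_filter x) _ _ (Hcvu x Ox) _ e2.
have cB := @cvgr_dist_lt _ _ _ _ (nbhs_filter x) _ _ (Hcuv x Ox) _ e2.
have oN := open_near' oO Ox.
have Hn := @filterI _ _ (nbhs_filter x) _ _ oN (@filterI _ _ (nbhs_filter x) _ _ cA cB).
have [d d0 Hball] := (nbhs_ballP _ _).1 Hn.
have inball : forall y, `|x - y| < d -> ball x d y.
  by move=> y hy; rewrite -ball_normE /ball_.
pose C := `|u| + `|v| + 1.
have C0 : 0 < C by rewrite /C ltr_wpDl // addr_ge0.
pose h := d / (2 * C).
have h0 : 0 < h by rewrite /h divr_gt0 // mulr_gt0.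
have hC : h * C = d / 2.
  rewrite /h; field; exact: lt0r_neq0.
have box : forall s t, 0 <= s <= h -> 0 <= t <= h -> `|x - (s *: u + (t *: v + x))| < d.
  move=> s t /andP[s0 sh] /andP[t0 th].
  rewrite (addrC (t *: v) x) addrCA opprD addrA subrr add0r normrN.
  apply: (le_lt_trans (ler_normD _ _)); rewrite !normrZ !(ger0_norm s0) !(ger0_norm t0).
  have nu := normr_ge0 u; have nv := normr_ge0 v.
  have H1 : s * `|u| <= h * `|u| := ler_wpM2r nu sh.
  have H2 : t * `|v| <= h * `|v| := ler_wpM2r nv th.
  have : s * `|u| + t * `|v| <= h * C by rewrite /C !mulrDr mulr1; lra.
  rewrite hC => H; apply: (le_lt_trans H).
  by rewrite [ltRHS](splitr d) ltrDl divr_gt0.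
have OB : forall s t, 0 <= s <= h -> 0 <= t <= h -> O (s *: u + (t *: v + x)).
  by move=> s t hs ht; have [] := Hball _ (inball _ (box s t hs ht)).
have hh : 0 <= h <= h by apply/andP; split => //; exact: ltW.
have h00 : (0 : R) <= 0 <= h by apply/andP; split => //; exact: ltW.
have [s1 /andP[s10 s1h] E1] := @mvt_line2 f u (h *: v + x) (0 *: v + x) h h0
   (fun t ht => conj (Hd _ (OB t h ht hh)) (Hd _ (OB t 0 ht h00))).
have s1in : 0 <= s1 <= h by apply/andP; split; exact: ltW.
have HD2 : forall t, 0 <= t <= h -> differentiable ('D_u f) (t *: v + (s1 *: u + x)).
  by move=> t ht; apply: Hdu; rewrite addrCA; exact: OB.
have [t1 /andP[t10 t1h] E2] := @mvt_line ('D_u f) v (s1 *: u + x) h h0 HD2.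
have OB' : forall s t, 0 <= s <= h -> 0 <= t <= h -> O (t *: v + (s *: u + x)).
  by move=> s t hs ht; rewrite addrCA; exact: OB.
have [t2 /andP[t20 t2h] E3] := @mvt_line2 f v (h *: u + x) (0 *: u + x) h h0
   (fun t ht => conj (Hd _ (OB' h t hh ht)) (Hd _ (OB' 0 t h00 ht))).
have t2in : 0 <= t2 <= h by apply/andP; split; exact: ltW.
have HD4 : forall s, 0 <= s <= h -> differentiable ('D_v f) (s *: u + (t2 *: v + x)).
  by move=> s hs; apply: Hdv; exact: OB.
have [s2 /andP[s20 s2h] E4] := @mvt_line ('D_v f) u (t2 *: v + x) h h0 HD4.
rewrite (addrCA (s1 *: u) (h *: v) x) (addrCA (s1 *: u) (0 *: v) x) E2 in E1.
rewrite (addrCA (t2 *: v) (h *: u) x) (addrCA (t2 *: v) (0 *: u) x) E4 in E3.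
rewrite !scale0r !add0r (addrCA (h *: u) (h *: v) x) in E1.
rewrite !scale0r !add0r in E3.
have hn0 : h != 0 by rewrite gt_eqF.
have gen : forall a1 b1 c1 d1 : R, a1 - b1 - (c1 - d1) = a1 - c1 - (b1 - d1).
  by move=> a1 b1 c1 d1; ring.
have Eq0 : 'D_v ('D_u f) (t1 *: v + (s1 *: u + x)) * h * h =
           'D_u ('D_v f) (s2 *: u + (t2 *: v + x)) * h * h.
  exact: (etrans (esym E1) (etrans (gen _ _ _ _) E3)).
have Eq := mulIf hn0 (mulIf hn0 Eq0).
rewrite (addrCA (t1 *: v)) in Eq.
have t1in : 0 <= t1 <= h by apply/andP; split; exact: ltW.
have s2in : 0 <= s2 <= h by apply/andP; split; exact: ltW.
have [_ [cAp _]] := Hball _ (inball _ (box s1 t1 s1in t1in)).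
have [_ [_ cBq]] := Hball _ (inball _ (box s2 t2 s2in t2in)).
exact: (fin_small Eq cAp cBq).
Qed.
End Clairaut.
Section Bracket.
Context (R : realType) (n : nat).
Local Notation pt := 'rV[R]_n.
Local Notation vf := (vfield R n).

Lemma clairaut (O : set pt) (f : pt -> R) i j x : open O -> O x -> Ck 2 O f ->
  pd j (pd i f) x = pd i (pd j f) x.
Proof.
move=> oO Ox [Hd HC]; have [Hdi Hci] := HC i; have [Hdj Hcj] := HC j.
exact (@clairaut_gen R n O f (evec R i) (evec R j) x oO Ox Hd Hdi Hdj (Hci j) (Hcj i)).
Qed.

Lemma pd_sum (F : 'I_n -> pt -> R) k x : (forall l, differentiable (F l) x) ->
  pd k (fun y => \sum_(l < n) F l y) x = \sum_(l < n) pd k (F l) x.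
Proof.
move=> dF; rewrite /pd.
have -> : (fun y => \sum_(l < n) F l y) = \sum_(l < n) F l by rewrite fct_sumE.
by rewrite derive_sum // => l; exact: diff_derivable.
Qed.

Lemma pd_loc0 (W : set pt) (g : pt -> R) k x : open W -> W x ->
  (forall y, W y -> g y = 0) -> pd k g x = 0.
Proof.
move=> oW Wx Hg; rewrite /pd (@near_eq_derive _ _ _ g (cst 0)) ?derive_cst //.
have : nbhs x W by apply: open_nbhs_nbhs.
by apply: filterS => y /Hg.
Qed.

Lemma sum_trick (P Q S1 S2 : 'I_n -> 'I_n -> R) :
    \sum_(k < n) \sum_(l < n) (P k l - Q k l) =
    (\sum_(k < n) \sum_(l < n) (S1 k l + P k l)) - (\sum_(k < n) \sum_(l < n) (S2 k l + Q k l))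
    + ((\sum_(k < n) \sum_(l < n) S2 k l) - \sum_(k < n) \sum_(l < n) S1 k l).
Proof.
rewrite -!sumrB -big_split; apply: eq_bigr => k _.
rewrite -!sumrB -big_split; apply: eq_bigr => l _.
by rewrite /=; ring.
Qed.

Lemma lie_ann (O : set pt) (A B : vf) f : open O -> Ck 2 O f ->
  (forall l, Ck 1 O (fun y => A y 0 l)) -> (forall l, Ck 1 O (fun y => B y 0 l)) ->
  (forall y, O y -> vf_apply A f y = 0) -> (forall y, O y -> vf_apply B f y = 0) ->
  forall x, O x -> vf_apply (lie A B) f x = 0.
Proof.
move=> oO Cf CA CB HA HB x Ox.
have Cf' := Cf; have [Hdf HC1] := Cf'.
have dpf : forall l, differentiable (pd l f) x by move=> l; exact: (HC1 l).1 x Ox.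
have expand : forall C : vf, (forall l, differentiable (fun y => C y 0 l) x) ->
   forall k, pd k (vf_apply C f) x =
     \sum_(l < n) (C x 0 l * pd k (pd l f) x + pd l f x * pd k (fun y => C y 0 l) x).
  move=> C dC k; rewrite /vf_apply pd_sum.
    by apply: eq_bigr => l _; rewrite pdM.
  by move=> l; apply: differentiableM.
have dA : forall l, differentiable (fun y => A y 0 l) x by move=> l; exact: (CA l).1 x Ox.
have dB : forall l, differentiable (fun y => B y 0 l) x by move=> l; exact: (CB l).1 x Ox.
have Z1 : \sum_(k < n) \sum_(l < n) (A x 0 k * B x 0 l * pd k (pd l f) x +
            A x 0 k * (pd l f x * pd k (fun y => B y 0 l) x)) = 0.
  apply: big1 => k _.
  have := pd_loc0 k oO Ox HB; rewrite (expand B dB) => e.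
  transitivity (A x 0 k * \sum_(l < n) (B x 0 l * pd k (pd l f) x +
      pd l f x * pd k (fun y => B y 0 l) x)); last by rewrite e mulr0.
  under eq_bigr => l _ do rewrite -mulrA -mulrDr.
  by rewrite -mulr_sumr.
have Z2 : \sum_(k < n) \sum_(l < n) (B x 0 k * A x 0 l * pd k (pd l f) x +
            B x 0 k * (pd l f x * pd k (fun y => A y 0 l) x)) = 0.
  apply: big1 => k _.
  have := pd_loc0 k oO Ox HA; rewrite (expand A dA) => e.
  transitivity (B x 0 k * \sum_(l < n) (A x 0 l * pd k (pd l f) x +
      pd l f x * pd k (fun y => A y 0 l) x)); last by rewrite e mulr0.
  under eq_bigr => l _ do rewrite -mulrA -mulrDr.
  by rewrite -mulr_sumr.
have sym : \sum_(k < n) \sum_(l < n) B x 0 k * A x 0 l * pd k (pd l f) x =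
           \sum_(k < n) \sum_(l < n) A x 0 k * B x 0 l * pd k (pd l f) x.
  rewrite exchange_big /=; apply: eq_bigr => k _.
  apply: eq_bigr => l _.
  by rewrite (clairaut k l oO Ox Cf) [B x 0 l * A x 0 k]mulrC.
have e0 : vf_apply (lie A B) f x = \sum_(k < n) \sum_(l < n)
     (A x 0 k * (pd l f x * pd k (fun y => B y 0 l) x) -
      B x 0 k * (pd l f x * pd k (fun y => A y 0 l) x)).
  rewrite {1}/vf_apply exchange_big /=; apply: eq_bigr => l _.
  rewrite mxE /vf_apply mulrBl !mulr_suml -sumrB; apply: eq_bigr => k _.
  by rewrite [pd l f x * _]mulrC [pd l f x * _]mulrC !mulrA.
rewrite e0.
rewrite (sum_trick _ _ (fun k l => A x 0 k * B x 0 l * pd k (pd l f) x)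
  (fun k l => B x 0 k * A x 0 l * pd k (pd l f) x)) /=.
by rewrite Z1 Z2 sym !subrr addr0.
Qed.

End Bracket.
Section Main.
Context (R : realType) (n : nat).
Local Notation pt := 'rV[R]_n.
Local Notation vf := (vfield R n).
Local Notation vf0 := (@vf0 R n).

Definition allsm (W : set pt) (s : seq vf) :=
  forall i, (i < size s)%N -> vf_smooth_on W (nth vf0 s i).

Lemma smooth_mul (W : set pt) (c g : pt -> R) : open W -> smooth_on W c ->
  smooth_on W g -> smooth_on W (fun x => c x * g x).
Proof. by move=> oW Hc Hg k; apply: Ck_mul. Qed.

Lemma smooth_add (W : set pt) (c g : pt -> R) : open W -> smooth_on W c ->
  smooth_on W g -> smooth_on W (fun x => c x + g x).
Proof. by move=> oW Hc Hg k; apply: Ck_add. Qed.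

Lemma elem_rowop_sm (W : set pt) s t : open W -> elem_rowop W s t -> allsm W s -> allsm W t.
Proof.
move=> oW; case=> {s t} [s i j Hi Hj|s i c Hi Hc _|s i j c Hi Hj Hij Hc];
  rewrite /row_swap /row_scale /row_addmul => H m; rewrite size_mkseq => Hm;
  rewrite nth_mkseq //.
- apply: H; case: ifP => _ //; case: ifP => _ //.
- case: ifP => _; last exact: H.
  move=> k; have -> : (fun x => (c x *: nth vf0 s i x) 0 k) = (fun x => c x * nth vf0 s i x 0 k).
    by apply/funext => x; rewrite mxE.
  by apply: smooth_mul => //; exact: H.
- case: ifP => _; last exact: H.
  move=> k; have -> : (fun x => (nth vf0 s i x + c x *: nth vf0 s j x) 0 k) =
     (fun x => nth vf0 s i x 0 k + c x * nth vf0 s j x 0 k).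
    by apply/funext => x; rewrite !mxE.
  apply: smooth_add => //; first exact: H.
  by apply: smooth_mul => //; exact: H.
Qed.

Lemma rowops_sm (W : set pt) s t : open W -> rowops W s t -> allsm W s -> allsm W t.
Proof. by move=> oW; elim=> // {s t} s t u H _ IH /(elem_rowop_sm oW H). Qed.

Lemma allsm_sub (W W' : set pt) s : W' `<=` W -> allsm W s -> allsm W' s.
Proof. by move=> sub H i Hi k kk; apply: Ck_sub sub _; exact: H. Qed.

Lemma rref_sm (W : set pt) Z Y : open W -> rref_of W Z Y -> allsm W Z -> allsm W Y.
Proof.
move=> oW [Zr [HZ HY _ _]] /(rowops_sm oW HZ) H i Hi.
have Hi' : (i < size Zr)%N.
  have := congr1 size HY; rewrite size_take; case: ltnP => h e; lia.
have e : nth vf0 Y i = nth vf0 Zr i by rewrite {1}HY nth_take.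
by rewrite e; apply: H.
Qed.

Lemma lie_sm (W : set pt) (A B : vf) : open W -> vf_smooth_on W A -> vf_smooth_on W B ->
  vf_smooth_on W (lie A B).
Proof.
move=> oW HA HB k kk.
have -> : (fun x => lie A B x 0 k) = (fun x =>
    \sum_(l < n) A x 0 l * pd l (fun y => B y 0 k) x +
    - \sum_(l < n) B x 0 l * pd l (fun y => A y 0 k) x).
  by apply/funext => x; rewrite mxE.
apply: Ck_add => //; last apply: Ck_opp => //.
  apply: Ck_sum => // l; apply: Ck_mul => //; first exact: HA.
  exact: ((HB k) kk.+1).2 l.
apply: Ck_sum => // l; apply: Ck_mul => //; first exact: HB.
exact: ((HA k) kk.+1).2 l.
Qed.

Lemma allsm_rcons (W : set pt) Y b : allsm W Y -> vf_smooth_on W b -> allsm W (rcons Y b).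
Proof.
move=> H Hb i; rewrite size_rcons ltnS nth_rcons leq_eqVlt => /orP [/eqP ->|hi].
  by rewrite ltnn eqxx.
by rewrite hi; apply: H.
Qed.

Lemma cont_sm (U : set pt) X k W Z : open U -> allsm U X -> cont U X k W Z ->
  open W /\ allsm W Z.
Proof.
move=> oU HX; elim=> [|{k W Z} k W Z W' Z' _ [oW HZ] rc]; first by [].
case: rc => Y [i [j [[oW' _ sub rr _] hi hj _ ->]]].
have HY : allsm W' Y := rref_sm oW' rr (allsm_sub sub HZ).
split => //; apply: allsm_rcons => //; apply: lie_sm => //; exact: HY.
Qed.

Lemma ann_rcons_intro (Y : seq vf) b f x : ann Y f x -> vf_apply b f x = 0 ->
  ann (rcons Y b) f x.
Proof.
move=> H Hb i; rewrite size_rcons ltnS nth_rcons leq_eqVlt => /orP [/eqP ->|hi].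
  by rewrite ltnn eqxx.
by rewrite hi; apply: H.
Qed.

Lemma cont_fwd (U : set pt) X k W Z (O : set pt) f : open U -> allsm U X ->
  cont U X k W Z -> O `<=` W -> open O -> smooth_on O f ->
  (forall y, O y -> ann X f y) -> forall y, O y -> ann Z f y.
Proof.
move=> oU HX Hc; elim: Hc O => [|{k W Z} k W Z W' Z' Hc IH rc] O OW oO sf HXa //.
have [oW HZ] := cont_sm oU HX Hc.
case: rc => Y [i [j [[oW' _ sub rr _] hi hj _ ->]]].
have HY : allsm W' Y := rref_sm oW' rr (allsm_sub sub HZ).
have OW' : O `<=` W by move=> y /OW /sub.
have HZa := IH O OW' oO sf HXa.
have HYa : forall y, O y -> ann Y f y by move=> y Oy; apply: rref_fwd rr _; exact: HZa.
move=> y Oy; apply: ann_rcons_intro; first exact: HYa.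
apply: (lie_ann oO (sf 2%N)) => //.
- by move=> l; apply: Ck_sub OW _; exact: (HY i hi l 1%N).
- by move=> l; apply: Ck_sub OW _; exact: (HY j hj l 1%N).
- by move=> z Oz; exact: HYa.
- by move=> z Oz; exact: HYa.
Qed.

End Main.

Theorem theorem1p2 (R : realType) (n : nat) (U : set 'rV[R]_n)
    (X : seq (vfield R n)) :
  (0 < n)%N -> open U ->
  (forall Xi, Xi \in X -> vf_smooth_on U Xi) ->
  (* termination: at most n iterations (k continuing ones plus the final one) *)
  (forall k W Z, cont U X k W Z -> (k < n)%N) /\
  (* the output family has the same local joint invariants *)
  (forall W V, final U X W V ->
     forall (O : set 'rV[R]_n) (f : 'rV[R]_n -> R), O `<=` W ->
       (joint_invariant X O f <-> joint_invariant V O f)).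
Proof.
move=> n0 oU HX; split; first by move=> k W Z; exact: cont_lt.
have HXs : allsm U X by move=> i Hi; apply: HX; exact: mem_nth.
move=> W V [k [W0 [Z [Hc [oW _ sub rr _] _]]]] O f OW.
split => -[oO sf Ha]; split => // Y HY y Oy.
- have Hann : forall z, O z -> ann X f z.
    by move=> z Oz i Hi; apply: Ha => //; exact: mem_nth.
  have OW0 : O `<=` W0 by move=> z /OW /sub.
  have HZ := cont_fwd oU HXs Hc OW0 oO sf Hann.
  have H1 : ann V f y := rref_fwd rr (HZ y Oy).
  by rewrite -(nth_index (@vf0 R n) HY); apply: H1; rewrite index_mem.
- have HVa : ann V f y by move=> i Hi; apply: Ha => //; exact: mem_nth.
  have H2 : ann X f y := cont_bwd Hc (sub _ (OW _ Oy)) (rref_bwd (OW _ Oy) rr HVa).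
  by rewrite -(nth_index (@vf0 R n) HY); apply: H2; rewrite index_mem.
Qed.
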